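(* Let a program execution be a finite sequence of heaps $h_0,h_1,\dots,h_n$, where $h_0$ is the initial heap in which the only allocated object is the special object $\mathit{Void}$, which is open ($\mathit{Void}.\mathit{closed}=\mathit{False}$), and each $h_{i+1}$ is obtained from $h_i$ by one elementary step: either allocating a fresh object (with some initial attribute values), or updating a single attribute $x.a$ of an allocated object $x$ to a new value. Consider a verification methodology $M$ whose proof obligations guarantee, for every step of every execution of a program that satisfies them: (a) every freshly allocated object is open (its $\mathit{closed}$ attribute is $\mathit{False}$); (b) whenever $x.\mathit{owner}$ is updated or $x.\mathit{closed}$ is set to $\mathit{False}$, the object $x$ is free in the state before the step (i.e. $x.\mathit{owner}.\mathit{closed}=\mathit{False}$); (c) whenever $x.\mathit{closed}$ is updated to $\mathit{True}$, every object $o\in x.\mathit{owns}$ satisfies $o.\mathit{closed}=\mathit{True}$ and $o.\mathit{owner}=x$ in the state before the step; (d) whenever an attribute $x.a$ with $a\notin\{\mathit{closed},\mathit{owner}\}$ is updated, $x$ is open in the state before the step. Then every program that satisfies $M$'s proof obligations satisfies, in every heap of every execution, the property $$\forall o,p:\ p.\mathit{closed}\wedge o\in p.\mathit{owns}\ \Rightarrow\ o.\mathit{closed}\wedge o.\mathit{owner}=p \qquad \text{(G2)}$$ (quantifying over allocated objects).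
   Context: Every object has built-in (ghost) attributes: $\mathit{closed}$ (Boolean, encoding consistency), $\mathit{owner}$ (an object) and $\mathit{owns}$ (a set of objects). An object $o$ is open if $o.\mathit{closed}=\mathit{False}$, and free if $o.\mathit{owner}$ is open. Deallocation is not modeled, so allocated objects only reference allocated objects. *)

(* Defs.v *)
(* O : type of object references, Void : O the special object,
   A : names of the remaining (non-built-in) attributes, V : their values. *)

Set Implicit Arguments.

Record heap (O A V : Type) := Heap {
  alloc  : O -> Prop;
  closed : O -> bool;
  owner  : O -> O;
  owns   : O -> O -> Prop;   (* owns x o  <->  o \in x.owns *)
  fld    : A -> O -> V
}.

Section Model.
Variables (O A V : Type) (Void : O).

Inductive action :=
| Alloc    (x : O)                 (* allocate fresh x with some initial values *)
| SetClosed (x : O) (b : bool)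
| SetOwner (x : O) (q : O)
| SetOwns  (x : O) (Sx : O -> Prop)
| SetFld   (x : O) (a : A) (v : V) .

(* h' is obtained from h by performing action act.  Allocated objects only
   reference allocated objects, so new owner / owns values must be allocated. *)
Definition step (h : heap O A V) (act : action) (h' : heap O A V) : Prop :=
  match act with
  | Alloc x =>
      ~ alloc h x /\
      (forall y, alloc h' y <-> (alloc h y \/ y = x)) /\
      (forall y, y <> x ->
         closed h' y = closed h y /\ owner h' y = owner h y /\
         owns h' y = owns h y /\ (forall a, fld h' a y = fld h a y)) /\
      alloc h' (owner h' x) /\
      (forall o, owns h' x o -> alloc h' o)
  | SetClosed x b =>
      alloc h x /\ alloc h' = alloc h /\
      closed h' x = b /\ (forall y, y <> x -> closed h' y = closed h y) /\
      owner h' = owner h /\ owns h' = owns h /\ fld h' = fld h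
  | SetOwner x q =>
      alloc h x /\ alloc h q /\ alloc h' = alloc h /\ closed h' = closed h /\
      owner h' x = q /\ (forall y, y <> x -> owner h' y = owner h y) /\
      owns h' = owns h /\ fld h' = fld h
  | SetOwns x Sx =>
      alloc h x /\ (forall o, Sx o -> alloc h o) /\
      alloc h' = alloc h /\ closed h' = closed h /\ owner h' = owner h /\
      owns h' x = Sx /\ (forall y, y <> x -> owns h' y = owns h y) /\
      fld h' = fld h
  | SetFld x a v =>
      alloc h x /\ alloc h' = alloc h /\ closed h' = closed h /\
      owner h' = owner h /\ owns h' = owns h /\
      fld h' a x = v /\
      (forall b y, (b <> a \/ y <> x) -> fld h' b y = fld h b y)
  end.

Definition initial_heap (h : heap O A V) : Prop :=
  (forall y, alloc h y <-> y = Void) /\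
  closed h Void = false /\
  owner h Void = Void /\
  (forall o, owns h Void o -> o = Void).

Definition obligations (h : heap O A V) (act : action) (h' : heap O A V) : Prop :=
  match act with
  | Alloc x => closed h' x = false
  | SetOwner x _ => closed h (owner h x) = false
  | SetClosed x false => closed h (owner h x) = false
  | SetClosed x true =>
      forall o, owns h x o -> closed h o = true /\ owner h o = x
  | SetOwns x _ => closed h x = false
  | SetFld x _ _ => closed h x = false
  end.

Definition G2 (h : heap O A V) : Prop :=
  forall o p, alloc h o -> alloc h p ->
    closed h p = true -> owns h p o -> closed h o = true /\ owner h o = p.

End Model.

(* Main.v *)
Require Import Defs.
From Stdlib Require Import Classical.

Definition Inv {O A V : Type} (h : heap O A V) : Prop :=
  G2 h /\ (forall p o, alloc h p -> owns h p o -> alloc h o).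

Lemma inv_step (O A V : Type) (h h' : heap O A V) (act : action O A V) :
  Inv h -> step h act h' -> obligations h act h' -> Inv h'.
Proof.
  intros [HG HA] Hs Ho. destruct act as [x|x b|x q|x Sx|x a v]; simpl in Hs, Ho.
  - destruct Hs as [Hn [Hal [Hoth [Hown Hox]]]]. split.
    + intros o p Ao Ap Cp Op.
      destruct (classic (p = x)) as [->|Hpx]; [congruence|].
      destruct (Hoth p Hpx) as [Cp' [Ow' [Os' _]]].
      apply Hal in Ap. destruct Ap as [Ap|Ap]; [|congruence].
      rewrite Cp', Os' in *. assert (alloc h o) by eauto.
      destruct (classic (o = x)) as [->|Hox']; [contradiction|].
      destruct (Hoth o Hox') as [Co' [Oo' _]]. rewrite Co', Oo'. eauto.
    + intros p o Ap Op. destruct (classic (p = x)) as [->|Hpx]; [eauto|].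
      destruct (Hoth p Hpx) as [_ [_ [Os' _]]]. rewrite Os' in Op.
      apply Hal. apply Hal in Ap. destruct Ap as [Ap|Ap]; [eauto|congruence].
  - destruct Hs as [Ax [Hal [Cx [Coth [Hw [Hos Hf]]]]]].
    split; [|rewrite Hal, Hos; exact HA].
    intros o p Ao Ap Cp Op. rewrite Hal in Ao, Ap. rewrite Hos in Op. rewrite Hw.
    destruct b.
    + destruct (classic (p = x)) as [->|Hpx].
      * destruct (Ho o Op) as [C1 O1]. split; [|exact O1].
        destruct (classic (o = x)) as [->|Hox]; [congruence|]. rewrite Coth; auto.
      * rewrite Coth in Cp by auto. destruct (HG o p Ao Ap Cp Op) as [C1 O1].
        split; [|exact O1].
        destruct (classic (o = x)) as [->|Hox]; [congruence|]. rewrite Coth; auto.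
    + destruct (classic (p = x)) as [->|Hpx]; [congruence|].
      rewrite Coth in Cp by auto. destruct (HG o p Ao Ap Cp Op) as [C1 O1].
      destruct (classic (o = x)) as [->|Hox].
      * subst p. congruence.
      * rewrite Coth; auto.
  - destruct Hs as [Ax [Aq [Hal [Hc [Wx [Woth [Hos Hf]]]]]]].
    split; [|rewrite Hal, Hos; exact HA].
    intros o p Ao Ap Cp Op. rewrite Hal in Ao, Ap. rewrite Hos in Op. rewrite Hc in *.
    destruct (HG o p Ao Ap Cp Op) as [C1 O1]. split; [exact C1|].
    destruct (classic (o = x)) as [->|Hox].
    + subst p. congruence.
    + rewrite Woth; auto.
  - destruct Hs as [Ax [HS [Hal [Hc [Hw [Ox [Ooth Hf]]]]]]]. split.
    + intros o p Ao Ap Cp Op. rewrite Hal in Ao, Ap. rewrite Hc, Hw in *.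
      destruct (classic (p = x)) as [->|Hpx]; [congruence|].
      rewrite Ooth in Op by auto. eauto.
    + intros p o Ap Op. rewrite Hal in *.
      destruct (classic (p = x)) as [->|Hpx].
      * rewrite Ox in Op. eauto.
      * rewrite Ooth in Op by auto. eauto.
  - destruct Hs as [Ax [Hal [Hc [Hw [Hos _]]]]].
    unfold Inv, G2 in *. rewrite Hal, Hc, Hw, Hos. split; assumption.
Qed.

Theorem lemma1 (O A V : Type) (Void : O)
  (n : nat) (hs : nat -> heap O A V) (acts : nat -> action O A V) :
  initial_heap Void (hs 0) ->
  (forall i, i < n -> step (hs i) (acts i) (hs (S i))) ->
  (forall i, i < n -> obligations (hs i) (acts i) (hs (S i))) ->
  forall i, i <= n -> G2 (hs i).
Proof.
  intros [Hal [Hc [Hw Hos]]] Hs Ho.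
  assert (H : forall i, i <= n -> Inv (hs i)).
  { induction i as [|i IH]; intros Hi.
    - split.
      + intros o p Ao Ap Cp Op. apply Hal in Ap. subst p. congruence.
      + intros p o Ap Op. apply Hal in Ap. subst p. apply Hal. auto.
    - apply (@inv_step O A V (hs i) (hs (S i)) (acts i)).
      + apply IH. apply le_S_n. apply le_S. exact Hi.
      + apply Hs. exact Hi.
      + apply Ho. exact Hi. }
  intros i Hi. apply H. exact Hi.
Qed.
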